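(* Let $p$ be an odd prime, $R=F_p+vF_p$ with $v^2=v$, $\theta=\lambda+v\mu$ ($\lambda,\mu\in F_p$) a unit of $R$, and $R_n=R[x]/\langle x^n-\theta\rangle$. Let $C$ be an ideal in $R_n$. Then there exists a unique polynomial $g(x)=vg(x)^{\sigma}+(1-v)g(x)^{\tau}\in C$ such that $C=\langle g(x)\rangle$ with $g(x)^\sigma$ and $g(x)^\tau$ monic in $F_p[x]$; furthermore, $g(x)$ is a divisor of $x^n-\theta$. In particular, $R_n$ is a principal ideal ring.
   Context: Every element of $R$ is uniquely $va+(1-v)b$ with $a,b\in F_p$; define $\sigma,\tau:R\to F_p$ by $\sigma(va+(1-v)b)=a$, $\tau(va+(1-v)b)=b$. For $f(x)=\sum a_ix^i\in R[x]$ put $f(x)^\sigma=\sum\sigma(a_i)x^i$ and $f(x)^\tau=\sum\tau(a_i)x^i$, so $f(x)=vf(x)^\sigma+(1-v)f(x)^\tau$. $\langle g\rangle$ denotes the ideal generated by $g$. *)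

(* Defs.v *)
From HB Require Import structures.
From mathcomp Require Import all_boot all_order all_algebra.
From mathcomp Require Import ring.
Set Implicit Arguments. Unset Strict Implicit. Unset Printing Implicit Defensive.
Import GRing.Theory.
Local Open Scope ring_scope.

(* The ring R = F_p + v F_p with v^2 = v.  The element [mkR a b] stands for
   a + v b  (a, b in F_p); multiplication is
   (a + v b)(c + v d) = ac + v (ad + bc + bd), using v^2 = v. *)
Section Rdef.
Variable p : nat.

Record Rv := mkR { rv0 : 'F_p; rv1 : 'F_p }.

Definition Rv_to (x : Rv) := (rv0 x, rv1 x).
Definition Rv_of (x : 'F_p * 'F_p) := mkR x.1 x.2.
Lemma Rv_toK : cancel Rv_to Rv_of. Proof. by case. Qed.
HB.instance Definition _ := Choice.copy Rv (can_type Rv_toK).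

Definition Rzero := mkR 0 0.
Definition Ropp (x : Rv) := mkR (- rv0 x) (- rv1 x).
Definition Radd (x y : Rv) := mkR (rv0 x + rv0 y) (rv1 x + rv1 y).
Definition Rone := mkR 1 0.
Definition Rmul (x y : Rv) :=
  mkR (rv0 x * rv0 y) (rv0 x * rv1 y + rv1 x * rv0 y + rv1 x * rv1 y).

Lemma RaddA : associative Radd.
Proof. by case=> a b [c d] [e f]; rewrite /Radd /=; congr mkR; ring. Qed.
Lemma RaddC : commutative Radd.
Proof. by case=> a b [c d]; rewrite /Radd /=; congr mkR; ring. Qed.
Lemma Radd0 : left_id Rzero Radd.
Proof. by case=> a b; rewrite /Radd /=; congr mkR; ring. Qed.
Lemma RaddN : left_inverse Rzero Ropp Radd.
Proof. by case=> a b; rewrite /Radd /=; congr mkR; ring. Qed.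

HB.instance Definition _ := GRing.isZmodule.Build Rv RaddA RaddC Radd0 RaddN.

Lemma RmulA : associative Rmul.
Proof. by case=> a b [c d] [e f]; rewrite /Rmul /=; congr mkR; ring. Qed.
Lemma RmulC : commutative Rmul.
Proof. by case=> a b [c d]; rewrite /Rmul /=; congr mkR; ring. Qed.
Lemma Rmul1 : left_id Rone Rmul.
Proof. by case=> a b; rewrite /Rmul /=; congr mkR; ring. Qed.
Lemma RmulDl : left_distributive Rmul Radd.
Proof. by case=> a b [c d] [e f]; rewrite /Rmul /Radd /=; congr mkR; ring. Qed.
Lemma Rone_neq0 : Rone != Rzero.
Proof.
apply/eqP=> /(congr1 rv0) /= /eqP; by rewrite oner_eq0.
Qed.

HB.instance Definition _ :=
  GRing.Zmodule_isComNzRing.Build Rv RmulA RmulC Rmul1 RmulDl Rone_neq0.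

Definition iFp (a : 'F_p) : Rv := mkR a 0.
Definition vR : Rv := mkR 0 1.

Lemma vR_idem : vR * vR = vR.
Proof. by rewrite /GRing.mul /= /Rmul /vR /=; congr mkR; ring. Qed.

(* sigma, tau : R -> F_p, defined by sigma (v a + (1 - v) b) = a and
   tau (v a + (1 - v) b) = b.  Since a + v b = v (a + b) + (1 - v) a,
   we get the explicit formulas below. *)
Definition sigmaR (r : Rv) : 'F_p := rv0 r + rv1 r.
Definition tauR (r : Rv) : 'F_p := rv0 r.

Lemma sigma_tau_decomp (r : Rv) :
  r = vR * iFp (sigmaR r) + (1 - vR) * iFp (tauR r).
Proof.
case: r => a b; rewrite /GRing.mul /GRing.add /GRing.opp /= /Rmul /Radd /Ropp.
rewrite /vR /iFp /sigmaR /tauR /=; congr mkR; ring.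
Qed.

Lemma sigma_tau_unique (r : Rv) (a b : 'F_p) :
  r = vR * iFp a + (1 - vR) * iFp b -> sigmaR r = a /\ tauR r = b.
Proof.
move=> ->; rewrite /GRing.mul /GRing.add /GRing.opp /= /Rmul /Radd /Ropp.
rewrite /vR /iFp /sigmaR /tauR /=; split; ring.
Qed.

End Rdef.

Definition poly_sigma (p : nat) (f : {poly Rv p}) : {poly 'F_p} :=
  map_poly (@sigmaR p) f.
Definition poly_tau (p : nat) (f : {poly Rv p}) : {poly 'F_p} :=
  map_poly (@tauR p) f.

(* R_n = R[x] / <x^n - theta>.  For n >= 1, x^n - theta is monic of size > 1,
   so {poly %/ ('X^n - theta%:P)} (qpoly.v) is exactly this quotient ring. *)
Definition Rn (p n : nat) (theta : Rv p) := {poly %/ ('X^n - theta%:P : {poly Rv p})}.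

Definition toRn (p n : nat) (theta : Rv p) (f : {poly Rv p}) : Rn n theta :=
  in_qpoly ('X^n - theta%:P) f.

Definition is_ideal (A : comNzRingType) (C : {pred A}) : Prop :=
  0 \in C /\ (forall x y, x \in C -> y \in C -> x - y \in C)
  /\ (forall a x, x \in C -> a * x \in C).

Definition generates (A : comNzRingType) (C : {pred A}) (g : A) : Prop :=
  forall y, y \in C <-> exists a, y = a * g.

Definition unitR (A : comNzRingType) (x : A) : Prop := exists y, x * y = 1.

(* Main.v *)
Require Import Defs.
From HB Require Import structures.
From mathcomp Require Import all_boot all_order all_algebra.
From mathcomp Require Import ring.
From Stdlib Require Import Classical.
Set Implicit Arguments. Unset Strict Implicit. Unset Printing Implicit Defensive.
Import GRing.Theory.
Local Open Scope ring_scope.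

Section Aux.
Variable p : nat.
Local Notation R := (Rv p).

Lemma sigma_zmod : zmod_morphism (@sigmaR p).
Proof. by case=> a b [c d]; rewrite /sigmaR /= ; ring. Qed.
Lemma sigma_monoid : monoid_morphism (@sigmaR p).
Proof. split; first by rewrite /sigmaR /= addr0.
by case=> a b [c d]; rewrite /sigmaR /=; ring. Qed.
HB.instance Definition _ := GRing.isZmodMorphism.Build R 'F_p (@sigmaR p) sigma_zmod.
HB.instance Definition _ := GRing.isMonoidMorphism.Build R 'F_p (@sigmaR p) sigma_monoid.

Lemma tau_zmod : zmod_morphism (@tauR p).
Proof. by case=> a b [c d]; rewrite /tauR /=. Qed.
Lemma tau_monoid : monoid_morphism (@tauR p).
Proof. split; first by [].
by case=> a b [c d]; rewrite /tauR /=. Qed.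
HB.instance Definition _ := GRing.isZmodMorphism.Build R 'F_p (@tauR p) tau_zmod.
HB.instance Definition _ := GRing.isMonoidMorphism.Build R 'F_p (@tauR p) tau_monoid.

Lemma iFp_zmod : zmod_morphism (@iFp p).
Proof. by move=> a b; rewrite /iFp /GRing.add /GRing.opp /= /Radd /Ropp /=; congr mkR; ring. Qed.
Lemma iFp_monoid : monoid_morphism (@iFp p).
Proof. split; first by [].
by move=> a b; rewrite /iFp /GRing.mul /= /Rmul /=; congr mkR; ring. Qed.
HB.instance Definition _ := GRing.isZmodMorphism.Build 'F_p R (@iFp p) iFp_zmod.
HB.instance Definition _ := GRing.isMonoidMorphism.Build 'F_p R (@iFp p) iFp_monoid.

Definition PS (q : {poly R}) : {poly 'F_p} := map_poly (@sigmaR p) q.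
Definition PT (q : {poly R}) : {poly 'F_p} := map_poly (@tauR p) q.
Definition liftR (a : {poly 'F_p}) : {poly R} := map_poly (@iFp p) a.
Definition vP : {poly R} := (vR p)%:P.
Definition dec a b := vP * liftR a + (1 - vP) * liftR b.

Lemma PS_lift a : PS (liftR a) = a.
Proof. by apply/polyP=> i; rewrite !coef_map /= /sigmaR /= addr0. Qed.
Lemma PT_lift a : PT (liftR a) = a.
Proof. by apply/polyP=> i; rewrite !coef_map. Qed.
Lemma PS_vP : PS vP = 1.
Proof. by rewrite /PS map_polyC /= /sigmaR /= add0r. Qed.
Lemma PT_vP : PT vP = 0.
Proof. by rewrite /PT map_polyC /= /tauR /=. Qed.

Lemma decE q : q = dec (PS q) (PT q).
Proof.
have E : 1 - vP = (1 - vR p)%:P by rewrite /vP polyCB.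
apply/polyP=> i; rewrite /dec E coefD !coefCM !coef_map /=.
exact: (sigma_tau_decomp q`_i).
Qed.

Lemma st_inj q q' : PS q = PS q' -> PT q = PT q' -> q = q'.
Proof. by move=> h1 h2; rewrite (decE q) (decE q') h1 h2. Qed.

Lemma PSM a b : PS (a * b) = PS a * PS b.
Proof. exact: (map_poly_is_monoid_morphism (@sigmaR p)).2. Qed.
Lemma PSB a b : PS (a - b) = PS a - PS b.
Proof. exact: (map_poly_is_zmod_morphism (@sigmaR p)). Qed.
Lemma PS1 : PS 1 = 1.
Proof. exact: (map_poly_is_monoid_morphism (@sigmaR p)).1. Qed.
Lemma PSD a b : PS (a + b) = PS a + PS b.
Proof. exact: (map_poly_is_nmod_morphism (@sigmaR p)).2. Qed.
Lemma PTM a b : PT (a * b) = PT a * PT b.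
Proof. exact: (map_poly_is_monoid_morphism (@tauR p)).2. Qed.
Lemma PTB a b : PT (a - b) = PT a - PT b.
Proof. exact: (map_poly_is_zmod_morphism (@tauR p)). Qed.
Lemma PT1 : PT 1 = 1.
Proof. exact: (map_poly_is_monoid_morphism (@tauR p)).1. Qed.
Lemma PTD a b : PT (a + b) = PT a + PT b.
Proof. exact: (map_poly_is_nmod_morphism (@tauR p)).2. Qed.
Lemma liftRM a b : liftR (a * b) = liftR a * liftR b.
Proof. exact: (map_poly_is_monoid_morphism (@iFp p)).2. Qed.
Lemma liftRB a b : liftR (a - b) = liftR a - liftR b.
Proof. exact: (map_poly_is_zmod_morphism (@iFp p)). Qed.

Lemma PS_vPc : PS (1 - vP) = 0. Proof. rewrite PSB PS1 PS_vP; exact: subrr. Qed.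
Lemma PT_vPc : PT (1 - vP) = 1. Proof. rewrite PTB PT1 PT_vP; exact: subr0. Qed.

Lemma PS_dec a b : PS (dec a b) = a.
Proof. by rewrite /dec PSD !PSM PS_vP PS_vPc !PS_lift mul1r mul0r addr0. Qed.
Lemma PT_dec a b : PT (dec a b) = b.
Proof. by rewrite /dec PTD !PTM PT_vP PT_vPc !PT_lift mul1r mul0r add0r. Qed.

Lemma vP_PS q : vP * liftR (PS q) = vP * q.
Proof. by apply: st_inj; rewrite ?PSM ?PTM ?PS_lift ?PT_lift ?PT_vP ?mul0r. Qed.
Lemma vPc_PT q : (1 - vP) * liftR (PT q) = (1 - vP) * q.
Proof. by apply: st_inj; rewrite ?PSM ?PTM ?PS_lift ?PT_lift ?PS_vPc ?mul0r. Qed.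

End Aux.
Lemma poly_ideal_gen (K : fieldType) (I : {poly K} -> Prop) :
  (forall a b, I a -> I b -> I (a - b)) ->
  (forall k a, I a -> I (k * a)) ->
  forall d, I d -> d != 0 ->
  exists g, [/\ g \is monic, I g & forall a, I a <-> g %| a].
Proof.
move=> Isub Imul.
have Iconv : forall g a, I g -> g %| a -> I a.
  by move=> g a Ig /dvdpP [q ->]; apply: Imul.
suff H : forall m (d : {poly K}), (size d <= m)%N -> I d -> d != 0 ->
  exists g, g \is monic /\ I g /\ forall a, I a -> g %| a.
  move=> d Id dn0; have [g [gm [Ig Hg]]] := H _ d (leqnn _) Id dn0.
  exists g; split=> // a; split; [exact: Hg | exact: Iconv].
elim=> [|m IH] d.
  by rewrite leqn0 size_poly_eq0 => /eqP -> _; rewrite eqxx.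
move=> sd Id dn0.
have [H|H] := classic (forall a, I a -> d %| a).
  exists ((lead_coef d)^-1 *: d); split; last split.
  - by apply/monicP; rewrite lead_coefZ mulVf // lead_coef_eq0.
  - by rewrite -mul_polyC; apply: Imul.
  - move=> a Ia; rewrite dvdpZl ?H // invr_eq0 lead_coef_eq0 //.
have [a Ha] := not_all_ex_not _ _ H.
have [Ia nda] := imply_to_and _ _ Ha.
have Ir : I (a %% d).
  have -> : a %% d = a - (a %/ d) * d by rewrite {2}(divp_eq a d) addrC addKr.
  by apply: Isub => //; apply: Imul.
have rn0 : a %% d != 0 by apply/negP => /eqP/modp_eq0P/idP; exact: nda.
apply: (IH (a %% d)) => //.
by rewrite -ltnS (leq_trans _ sd) // ltn_modp.
Qed.
Section Main.
Variables (p n : nat) (theta : Rv p).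
Hypothesis n0 : (0 < n)%N.
Local Notation f := ('X^n - theta%:P : {poly Rv p}).

Lemma fmon : f \is monic. Proof. exact: monicXnsubC. Qed.
Lemma mkf : mk_monic f = f.
Proof. by rewrite /mk_monic size_XnsubC // fmon; case: n n0. Qed.

Lemma toRnM a b : toRn n theta (a * b) = toRn n theta a * toRn n theta b.
Proof. exact: in_qpolyM. Qed.
Lemma toRnD a b : toRn n theta (a + b) = toRn n theta a + toRn n theta b.
Proof. exact: in_qpolyD. Qed.
Lemma toRnB a b : toRn n theta (a - b) = toRn n theta a - toRn n theta b.
Proof. exact: raddfB. Qed.

Lemma toRn_val (y : Rn n theta) : toRn n theta (val y) = y.
Proof. apply: val_inj => /=; exact: (in_qpoly_small (size_mk_monic y)). Qed.

Lemma toRn_ker q : toRn n theta q = 0 -> exists k, q = k * f.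
Proof.
move=> /(congr1 val) /= H; exists (Pdiv.Ring.rdivp q (mk_monic f)).
rewrite {1}(Pdiv.RingMonic.rdivp_eq (monic_mk_monic f) q).
by rewrite /toRn /in_qpoly /= in H; rewrite H addr0 mkf.
Qed.

Lemma toRn_f : toRn n theta f = 0.
Proof.
apply: val_inj; rewrite /toRn /in_qpoly /= mkf.
exact: (Pdiv.RingMonic.rmodpp fmon).
Qed.
End Main.

Unset Implicit Arguments.
Theorem corollary3p8 (p : nat) (n : nat) (lambda mu : 'F_p)
  (C : {pred Rn n (iFp lambda + vR p * iFp mu)}) :
  prime p -> odd p -> (0 < n)%N ->
  unitR (iFp lambda + vR p * iFp mu) ->
  is_ideal C ->
  let theta := iFp lambda + vR p * iFp mu in
  let P := fun g : {poly Rv p} =>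
    [/\ poly_sigma g \is monic, poly_tau g \is monic,
        (exists h : {poly Rv p}, 'X^n - theta%:P = g * h),
        toRn n theta g \in C & generates C (toRn n theta g)] in
  exists g : {poly Rv p}, P g /\ (forall g', P g' -> g' = g).
Proof.
move=> _ _ n0 _ [C0 [Csub Cmul]] theta P.
set f := 'X^n - theta%:P.
pose T := toRn n theta.
have Cadd x y : x \in C -> y \in C -> x + y \in C.
  move=> hx hy; have -> : x + y = x - (0 - y) by rewrite sub0r opprK.
  by apply: (Csub) => //; apply: (Csub).
pose I1 a := T (vP p * liftR a) \in C.
pose I2 a := T ((1 - vP p) * liftR a) \in C.
have I1sub a b : I1 a -> I1 b -> I1 (a - b).
  by move=> ha hb; rewrite /I1 liftRB mulrBr /T toRnB; exact: Csub.
have I2sub a b : I2 a -> I2 b -> I2 (a - b).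
  by move=> ha hb; rewrite /I2 liftRB mulrBr /T toRnB; exact: Csub.
have I1mul k a : I1 a -> I1 (k * a).
  by move=> ha; rewrite /I1 liftRM mulrCA /T toRnM; exact: Cmul.
have I2mul k a : I2 a -> I2 (k * a).
  by move=> ha; rewrite /I2 liftRM mulrCA /T toRnM; exact: Cmul.
have I1q q : T q \in C -> I1 (PS q).
  by move=> hq; rewrite /I1 vP_PS /T toRnM; exact: Cmul.
have I2q q : T q \in C -> I2 (PT q).
  by move=> hq; rewrite /I2 vPc_PT /T toRnM; exact: Cmul.
have Tf : T f = 0 by exact: toRn_f.
have Cf : T f \in C by rewrite Tf.
have fsn0 : PS f != 0.
  rewrite /PS rmorphB /= map_polyXn map_polyC /=.
  by apply: monic_neq0; exact: monicXnsubC.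
have ftn0 : PT f != 0.
  rewrite /PT rmorphB /= map_polyXn map_polyC /=.
  by apply: monic_neq0; exact: monicXnsubC.
have [g1 [g1m Ig1 Hg1]] := poly_ideal_gen I1sub I1mul (I1q _ Cf) fsn0.
have [g2 [g2m Ig2 Hg2]] := poly_ideal_gen I2sub I2mul (I2q _ Cf) ftn0.
pose g := dec g1 g2.
have PSg : poly_sigma g = g1 by exact: PS_dec.
have PTg : poly_tau g = g2 by exact: PT_dec.
have Cg : T g \in C by rewrite /g /dec /T toRnD; apply: Cadd.
exists g; split.
  split.
  - by rewrite PSg.
  - by rewrite PTg.
  - have /dvdpP [h1 e1] := (Hg1 _).1 (I1q _ Cf).
    have /dvdpP [h2 e2] := (Hg2 _).1 (I2q _ Cf).
    exists (dec h1 h2); apply: st_inj.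
      by rewrite -/f PSM PS_dec PS_dec e1 mulrC.
    by rewrite -/f PTM PT_dec PT_dec e2 mulrC.
  - exact: Cg.
  - move=> y; split; last by move=> [a ->]; exact: Cmul.
    move=> yC; have Ty : T (val y) = y by exact: toRn_val.
    rewrite -Ty in yC.
    have /dvdpP [k1 e1] := (Hg1 _).1 (I1q _ yC).
    have /dvdpP [k2 e2] := (Hg2 _).1 (I2q _ yC).
    exists (T (dec k1 k2)); rewrite -Ty /T -toRnM; congr (toRn _ _ _).
    apply: st_inj.
      by rewrite PSM PS_dec PS_dec e1.
    by rewrite PTM PT_dec PT_dec e2.
move=> g' [m1 m2 [h' eh] Cg' gen'].
have dvd1 : PS g' %| PS f.
  by apply/dvdpP; exists (PS h'); rewrite /f eh PSM mulrC.
have dvd2 : PT g' %| PT f.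
  by apply/dvdpP; exists (PT h'); rewrite /f eh PTM mulrC.
have e1 : PS g' = g1.
  apply/eqP; rewrite -eqp_monic //; apply/andP; split; last first.
    by apply: (Hg1 _).1; exact: I1q.
  have [w Ew] := (gen' _).1 Ig1.
  have : T (vP p * liftR g1 - val w * g') = 0.
    by rewrite /T toRnB [toRn _ _ (val w * _)]toRnM toRn_val -Ew subrr.
  move=> /(toRn_ker n0) [k Ek].
  have := congr1 (@PS p) Ek; rewrite PSB !PSM PS_vP PS_lift mul1r => E.
  have -> : g1 = (PS k * (PS f %/ PS g') + PS w) * PS g'.
    rewrite mulrDl -mulrA divpK // -E; ring.
  exact: dvdp_mull (dvdpp _).
have e2 : PT g' = g2.
  apply/eqP; rewrite -eqp_monic //; apply/andP; split; last first.
    by apply: (Hg2 _).1; exact: I2q.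
  have [w Ew] := (gen' _).1 Ig2.
  have : T ((1 - vP p) * liftR g2 - val w * g') = 0.
    by rewrite /T toRnB [toRn _ _ (val w * _)]toRnM toRn_val -Ew subrr.
  move=> /(toRn_ker n0) [k Ek].
  have := congr1 (@PT p) Ek; rewrite PTB !PTM PT_vPc PT_lift mul1r => E.
  have -> : g2 = (PT k * (PT f %/ PT g') + PT w) * PT g'.
    rewrite mulrDl -mulrA divpK // -E; ring.
  exact: dvdp_mull (dvdpp _).
by rewrite (decE g') e1 e2.
Qed.
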